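(* A hypersemigroup $(H,\circ)$ is intra-regular if and only if for every right ideal $X$, every left ideal $Y$ and every bi-ideal $B$ of $H$ we have $X\cap B\cap Y\subseteq Y*B*X$.
   Context: Let $H$ be a nonempty set and $\mathcal{P}^*(H)$ the set of all nonempty subsets of $H$. A hyperoperation on $H$ is a map $\circ: H\times H\to \mathcal{P}^*(H)$; the pair $(H,\circ)$ is a hypergroupoid. For $A,B\in\mathcal{P}^*(H)$ define $A*B:=\bigcup_{(a,b)\in A\times B}(a\circ b)$. A hypergroupoid is a hypersemigroup if $\{x\}*(y\circ z)=(x\circ y)*\{z\}$ for all $x,y,z\in H$; then $*$ is associative on $\mathcal{P}^*(H)$. A hypersemigroup is intra-regular if for every $a\in H$ there exist $x,y\in H$ with $a\in\{x\}*\{a\}*\{a\}*\{y\}$. A nonempty subset $A$ of $H$ is a left ideal if $H*A\subseteq A$ and a right ideal if $A*H\subseteq A$. A nonempty subset $B$ of $H$ is a bi-ideal if $B*H*B\subseteq B$. *)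

(* Defs.v *)
From Stdlib Require Import Classical.


(* A hyperoperation: o a b is the (nonempty) subset a∘b of H, as a predicate. *)
Definition is_hyperoperation {H : Type} (o : H -> H -> H -> Prop) : Prop :=
  forall a b : H, exists c, o a b c.

Definition hprod {H : Type} (o : H -> H -> H -> Prop) (A B : H -> Prop) : H -> Prop :=
  fun c => exists a b, A a /\ B b /\ o a b c.

Definition sing {H : Type} (x : H) : H -> Prop := fun y => y = x.

Definition incl {H : Type} (A B : H -> Prop) : Prop := forall x, A x -> B x.

Definition nonempty {H : Type} (A : H -> Prop) : Prop := exists x, A x.

Definition full {H : Type} : H -> Prop := fun _ => True.

Definition is_hypersemigroup {H : Type} (o : H -> H -> H -> Prop) : Prop :=
  is_hyperoperation o /\
  forall x y z : H, forall t,
    hprod o (sing x) (o y z) t <-> hprod o (o x y) (sing z) t.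

Definition intra_regular {H : Type} (o : H -> H -> H -> Prop) : Prop :=
  forall a : H, exists x y : H,
    hprod o (hprod o (hprod o (sing x) (sing a)) (sing a)) (sing y) a.

Definition left_ideal {H : Type} (o : H -> H -> H -> Prop) (A : H -> Prop) : Prop :=
  nonempty A /\ incl (hprod o full A) A.

Definition right_ideal {H : Type} (o : H -> H -> H -> Prop) (A : H -> Prop) : Prop :=
  nonempty A /\ incl (hprod o A full) A.

Definition bi_ideal {H : Type} (o : H -> H -> H -> Prop) (B : H -> Prop) : Prop :=
  nonempty B /\ incl (hprod o (hprod o B full) B) B.

(* Main.v *)
Require Import Defs.
From Stdlib Require Import FunctionalExtensionality PropExtensionality.

Section S.
Variable H : Type.
Variable o : H -> H -> H -> Prop.
Local Infix "**" := (hprod o) (at level 40, left associativity).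

Lemma assoc (Ho : is_hypersemigroup o) (A B C : H -> Prop) :
  (A ** B) ** C = A ** (B ** C).
Proof.
  destruct Ho as [_ Ha].
  apply functional_extensionality; intro t; apply propositional_extensionality.
  unfold hprod; split.
  - intros (u & c & (a & b & Aa & Bb & Hu) & Cc & Ht).
    assert (hprod o (o a b) (sing c) t) as H1 by (exists u, c; unfold sing; auto).
    apply Ha in H1. destruct H1 as (a' & v & Ea & Hv & Ht').
    unfold sing in Ea; subst a'. exists a, v; repeat split; auto.
    exists b, c; auto.
  - intros (a & v & Aa & (b & c & Bb & Cc & Hv) & Ht).
    assert (hprod o (sing a) (o b c) t) as H1 by (exists a, v; unfold sing; auto).
    apply Ha in H1. destruct H1 as (u & c' & Hu & Ec & Ht').
    unfold sing in Ec; subst c'. exists u, c; repeat split; auto.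
    exists a, b; auto.
Qed.

Lemma mono (A A' B B' : H -> Prop) : incl A A' -> incl B B' -> incl (A ** B) (A' ** B').
Proof. unfold incl, hprod; intros h1 h2 t (a & b & Aa & Bb & Ht); exists a, b; auto. Qed.

Lemma incl_trans (A B C : H -> Prop) : incl A B -> incl B C -> incl A C.
Proof. unfold incl; auto. Qed.

Lemma incl_refl (A : H -> Prop) : incl A A.
Proof. unfold incl; auto. Qed.

Lemma sing_incl (A : H -> Prop) a : A a -> incl (sing a) A.
Proof. unfold incl, sing; intros; subst; auto. Qed.

Lemma incl_full (A : H -> Prop) : incl A full.
Proof. unfold incl, full; auto. Qed.

End S.

Theorem proposition24 (H : Type) (o : H -> H -> H -> Prop)
  (Ho : is_hypersemigroup o) :
  intra_regular o <->
  (forall X Y B : H -> Prop,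
     right_ideal o X -> left_ideal o Y -> bi_ideal o B ->
     incl (fun h => X h /\ B h /\ Y h) (hprod o (hprod o Y B) X)).
Proof.
  split.
  - intros IR X Y B [_ HX] [_ HY] [_ HB] a (Xa & Ba & Ya).
    destruct (IR a) as (x & y & Ha).
    set (S := hprod o (hprod o (hprod o (sing x) (sing a)) (sing a)) (sing y)) in *.
    assert (Hs : incl (sing a) S) by (apply sing_incl; exact Ha).
    assert (H2 : hprod o (hprod o (hprod o (sing x) S) S) (sing y) a).
    { generalize Ha; unfold S at 1. apply mono; [apply mono; [apply mono|]|]; first [exact Hs | apply incl_refl]. }
    assert (E : hprod o (hprod o (hprod o (sing x) S) S) (sing y) =
      hprod o (hprod o (hprod o (hprod o (sing x) (sing x)) (sing a))
                       (hprod o (hprod o (sing a) (hprod o (sing y) (sing x))) (sing a)))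
              (hprod o (hprod o (sing a) (sing y)) (sing y))).
    { unfold S; rewrite !(assoc _ _ Ho); reflexivity. }
    rewrite E in H2. revert H2. apply mono; [apply mono|].
    + eapply incl_trans; [|exact HY]. apply mono; [apply incl_full|apply sing_incl; auto].
    + eapply incl_trans; [|exact HB]. apply mono; [apply mono|];
        try apply incl_full; apply sing_incl; auto.
    + eapply incl_trans; [|exact HX]. eapply incl_trans; [|apply mono;[exact HX|apply incl_refl]].
      apply mono; [apply mono|]; try apply incl_full; apply sing_incl; auto.
  - intros P a.
    set (X := fun z => z = a \/ hprod o (sing a) full z).
    set (Y := fun z => z = a \/ hprod o full (sing a) z).
    assert (RX : incl (hprod o X full) X).
    { intros z (u & h & Xu & _ & Hz). right. destruct Xu as [-> | Hu].
      - exists a, h; unfold sing, full; auto.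
      - assert (hprod o (hprod o (sing a) full) full z) as H1 by (exists u, h; unfold full; auto).
        rewrite (assoc _ _ Ho) in H1. revert H1. apply mono; [apply incl_refl|apply incl_full]. }
    assert (LY : incl (hprod o full Y) Y).
    { intros z (h & u & _ & Yu & Hz). right. destruct Yu as [-> | Hu].
      - exists h, a; unfold sing, full; auto.
      - assert (hprod o full (hprod o full (sing a)) z) as H1 by (exists h, u; unfold full; auto).
        rewrite <- (assoc _ _ Ho) in H1. revert H1. apply mono; [apply incl_full|apply incl_refl]. }
    assert (Ha : hprod o (hprod o Y X) X a).
    { apply P.
      - split; [exists a; left; reflexivity | exact RX].
      - split; [exists a; left; reflexivity | exact LY].
      - split; [exists a; left; reflexivity |].
        eapply incl_trans; [|exact RX]. eapply incl_trans; [|apply mono; [exact RX|apply incl_refl]].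
        apply mono; apply incl_refl || apply incl_full.
      - unfold X, Y; auto. }
    assert (XX : incl (hprod o X X) (hprod o (sing a) full)).
    { intros z (u & v & Xu & Xv & Hz). destruct Xu as [-> | Hu].
      - exists a, v; unfold sing, full; auto.
      - assert (hprod o (hprod o (sing a) full) full z) as H1 by (exists u, v; unfold full; auto).
        rewrite (assoc _ _ Ho) in H1. revert H1. apply mono; [apply incl_refl|apply incl_full]. }
    rewrite (assoc _ _ Ho) in Ha.
    assert (Ha2 : hprod o Y (hprod o (sing a) full) a) by (revert Ha; apply mono; [apply incl_refl|exact XX]).
    destruct Ha2 as (y & w & Yy & Hw & Hay).
    destruct Yy as [-> | Hy].
    +
      assert (H0 : hprod o (hprod o (sing a) (sing a)) full a).
      { rewrite (assoc _ _ Ho). exists a, w; unfold sing; auto. }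
      assert (H1 : hprod o (hprod o (sing a) (hprod o (hprod o (sing a) (sing a)) full)) full a).
      { generalize H0. apply mono; [apply mono|]; try apply incl_refl. apply sing_incl; exact H0. }
      rewrite !(assoc _ _ Ho) in H1.
      destruct H1 as (x & v & Ex & Hv & Ht). unfold sing in Ex; subst x.
      destruct Hv as (a1 & v2 & E1 & Hv2 & Hv). unfold sing in E1; subst a1.
      destruct Hv2 as (a2 & v3 & E2 & Hv3 & Hv2). unfold sing in E2; subst a2.
      destruct Hv3 as (f1 & f2 & _ & _ & Hv3).
      destruct (proj1 Ho f1 f2) as [yy _]. 
      exists a, v3.
      rewrite !(assoc _ _ Ho).
      exists a, v; unfold sing; repeat split; auto.
      exists a, v2; repeat split; auto.
      exists a, v3; repeat split; auto.
    + assert (H1 : hprod o (hprod o (hprod o full (sing a)) (sing a)) full a).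
      { assert (H2 : hprod o (hprod o full (sing a)) (hprod o (sing a) full) a) by (exists y, w; auto).
        rewrite <- (assoc _ _ Ho) in H2. exact H2. }
      destruct H1 as (u & v & (u1 & a3 & (x & a4 & _ & E4 & Hx) & E3 & Hu) & _ & Ht).
      unfold sing in E3, E4; subst a3 a4.
      exists x, v. exists u, v; unfold sing; repeat split; auto.
      exists u1, a; repeat split; auto. exists x, a; repeat split; auto.
Qed.
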